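(* Assume $PS(h,P_h)>PS(\ell,P_h)$ and $PS(\ell,P_\ell)>PS(h,P_\ell)$. Fix an integer $d\ge 2$. Consider a sequence of peer prediction instances indexed by $n$, with the following properties: - they all share the same values of $P(h)$, $P(h\mid h)$, $P(h\mid\ell)$ and the same $PS$; - for each $n$, the admissible family $\mathcal D_n$ contains some set $D_n\subseteq[n]$ with $|D_n|=d$; - for each signal profile $s_D\in\{\ell,h\}^d$ of $D_n$ containing at least one $h$ and at least one $\ell$, the conditional probability $p(s_D)=Q_n(\Psi_j=h\mid \Psi_{D_n}=s_D)$ for $j\notin D_n$ does not depend on $n$. Then for all sufficiently large $n$, the truthful profile $\Sigma^*$ is not an interim $\mathcal D_n$ equilibrium.
   Context: Peer prediction setting. There are $n$ agents. Signals $\Psi_i\in\{\ell,h\}$ are drawn from a symmetric common prior $Q_n$ on $\{\ell,h\}^n$. $P(s\mid s')$ is the probability that another agent has signal $s$ given that one's own signal is $s'$, and $P_{s'}=P(\cdot\mid s')$. Standing assumptions: $P(\ell),P(h)>0$, $P(h\mid h)>P(h\mid\ell)$, $P(h\mid\ell)>0$ and $P(\ell\mid h)>0$. $PS$ is a strictly proper scoring rule. Each agent reports $r_i\in\{\ell,h\}$ and receives $v_i=\frac1{n-1}\sum_{j\ne i}PS(r_j,P_{r_i})$. Strategies map signals to distributions over reports, and $\Sigma^*$ is the profile in which every agent reports truthfully. Given a family $\mathcal D$ of admissible subsets of $[n]$, a profile $\Sigma$ is an interim $\mathcal D$ equilibrium if there do not exist $D\in\mathcal D$, a signal profile $s_D=(s_i)_{i\in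 D}$, and a profile $\Sigma'$ such that: (1) $\sigma'_i=\sigma_i$ for all $i\notin D$; and (2) for all $i\in D$, $u_i(\Sigma'\mid s_D)>u_i(\Sigma\mid s_D)$. Here $u_i(\cdot\mid s_D)$ is $i$'s expected utility conditioned on the signals of all members of $D$ being $s_D$. *)

(* Defs.v *)
From HB Require Import structures.
From mathcomp Require Import all_boot all_order all_algebra all_fingroup.
Set Implicit Arguments. Unset Strict Implicit. Unset Printing Implicit Defensive.
Import Order.TTheory GRing.Theory Num.Theory.
Local Open Scope ring_scope.

(* Signals / reports: true = h, false = l.  A signal (or report) profile. *)
Definition prof (n : nat) := {ffun 'I_n -> bool}.

(* A distribution over {l,h} is represented by its probability of h. *)

Definition pr (R : realFieldType) n (Q : prof n -> R) (A : pred (prof n)) : R :=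
  \sum_(psi | A psi) Q psi.

(* Conditional probability Q(A | B) (ratio; x / 0 = 0 by MathComp convention). *)
Definition cprob (R : realFieldType) n (Q : prof n -> R) (A B : pred (prof n)) : R :=
  pr Q (predI A B) / pr Q B.

Definition is_sym_prior (R : realFieldType) n (Q : prof n -> R) : Prop :=
  [/\ forall psi, 0 <= Q psi,
      \sum_psi Q psi = 1 &
      forall (pi : {perm 'I_n}) (psi : prof n), Q [ffun k => psi (pi k)] = Q psi].

Definition strictly_proper (R : realFieldType) (PS : bool -> R -> R) : Prop :=
  forall p q : R, 0 <= p <= 1 -> 0 <= q <= 1 -> p != q ->
    p * PS true q + (1 - p) * PS false q < p * PS true p + (1 - p) * PS false p.

(* Payment v_i(r) = 1/(n-1) sum_{j <> i} PS(r_j, P_{r_i}), with P_h = phh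
   (= P(h|h)) and P_l = phl (= P(h|l)). *)
Definition payment (R : realFieldType) n (PS : bool -> R -> R) (phh phl : R)
    (i : 'I_n) (r : prof n) : R :=
  (n.-1)%:R^-1 * \sum_(j | j != i) PS (r j) (if r i then phh else phl).

(* Strategy profile: S i b = probability that agent i reports h given signal b. *)
Definition strat (R : realFieldType) n := 'I_n -> bool -> R.

Definition valid_strat (R : realFieldType) n (S : strat R n) : Prop :=
  forall i b, 0 <= S i b <= 1.

Definition truthful (R : realFieldType) n : strat R n :=
  fun _ b => if b then 1 else 0.

Definition report_prob (R : realFieldType) n (S : strat R n) (psi r : prof n) : R :=
  \prod_k (if r k then S k (psi k) else 1 - S k (psi k)).

Definition agree n (D : {set 'I_n}) (s : prof n) : pred (prof n) :=
  fun psi => [forall k in D, psi k == s k].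

Definition util (R : realFieldType) n (Q : prof n -> R) (PS : bool -> R -> R)
    (phh phl : R) (S : strat R n) (i : 'I_n) (D : {set 'I_n}) (s : prof n) : R :=
  (\sum_(psi | agree D s psi)
      Q psi * \sum_r report_prob S psi r * payment PS phh phl i r)
  / pr Q (agree D s).

Definition interim_eq (R : realFieldType) n (Q : prof n -> R) (PS : bool -> R -> R)
    (phh phl : R) (Dfam : {set {set 'I_n}}) (S : strat R n) : Prop :=
  ~ exists (D : {set 'I_n}) (s : prof n) (S' : strat R n),
      [/\ D \in Dfam, valid_strat S',
          (forall i, i \notin D -> forall b, S' i b = S i b) &
          (forall i, i \in D -> util Q PS phh phl S i D s < util Q PS phh phl S' i D s)].

(* Main.v *)
Require Import Defs.
From HB Require Import structures.
From mathcomp Require Import all_boot all_order all_algebra all_fingroup.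
From mathcomp Require Import ring lra.
Import Order.TTheory GRing.Theory Num.Theory.
Local Open Scope ring_scope.

Module Helpers.
Set Implicit Arguments. Unset Strict Implicit. Unset Printing Implicit Defensive.
Lemma sum_det (R : realFieldType) n (S : strat R n) (psi : prof n) (F : prof n -> R) :
  (forall k b, S k b = 0 \/ S k b = 1) ->
  \sum_r report_prob S psi r * F r = F [ffun k => S k (psi k) == 1].
Proof.
move=> HS; set rep := [ffun k => _].
have E : forall r, report_prob S psi r = (r == rep)%:R.
  move=> r; rewrite /report_prob; case: eqP => [->|neq].
    apply: big1 => k _; rewrite /rep ffunE.
    case: (HS k (psi k)) => ->; last by rewrite eqxx.
    by rewrite eq_sym oner_eq0 subr0.
  have : ~~ [forall k, r k == rep k].
    apply/negP => /forallP H; apply: neq; apply/ffunP => k; exact/eqP.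
  rewrite negb_forall => /existsP [k Hk].
  rewrite (bigD1 k) //=; move: Hk; rewrite /rep ffunE.
  case: (HS k (psi k)) => ->; case: (r k) => //=.
  all: rewrite ?eqxx ?subrr ?mul0r //.
  by rewrite (eq_sym (0:R)) oner_eq0.
under eq_bigr => r _ do rewrite E.
rewrite (bigD1 rep) //= eqxx mul1r big1 ?addr0 // => r Hr.
by rewrite (negbTE Hr) mul0r.
Qed.

Definition mk n (D : {set 'I_n}) (t : 'I_n -> bool) (psi : prof n) : prof n :=
  [ffun k => if k \in D then t k else psi k].

Lemma key (R : realFieldType) n (Q : prof n -> R) (PS : bool -> R -> R) (phh phl : R)
  (D : {set 'I_n}) (s : prof n) (t : 'I_n -> bool) (i : 'I_n) (pj : R) :
  i \in D ->
  (forall j, j \notin D -> \sum_(psi : prof n | psi j && agree D s psi) Q psi = pj * pr Q (agree D s)) ->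
  \sum_(psi | agree D s psi) Q psi * payment PS phh phl i (mk D t psi) =
  pr Q (agree D s) * ((n.-1)%:R^-1 *
    ((\sum_(j in D) PS (t j) (if t i then phh else phl) - PS (t i) (if t i then phh else phl))
     + #|~: D|%:R * (pj * PS true (if t i then phh else phl)
                     + (1 - pj) * PS false (if t i then phh else phl)))).
Proof.
move=> iD Hp.
set q := (if t i then phh else phl).
set pD := pr Q (agree D s).
set k := (n.-1)%:R^-1.
have E1 : forall psi, payment PS phh phl i (mk D t psi) =
    k * \sum_(j | j != i) PS (mk D t psi j) q.
  by move=> psi; rewrite /payment /mk ffunE iD.
transitivity (k * \sum_(j | j != i) \sum_(psi | agree D s psi) Q psi * PS (mk D t psi j) q).
  rewrite mulr_sumr.
  under eq_bigr => psi _ do rewrite E1 mulrCA mulr_sumr.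
  rewrite -!mulr_sumr; congr (k * _); exact: exchange_big.
rewrite mulrCA; congr (k * _).
rewrite (bigID (fun j => j \in D)) /= mulrDr; congr (_ + _).
  transitivity (\sum_(j | (j != i) && (j \in D)) pD * PS (t j) q).
    apply: eq_bigr => j /andP [_ jD].
    under eq_bigr => psi _ do rewrite /mk ffunE jD.
    by rewrite -mulr_suml mulrC.
  rewrite -mulr_sumr; congr (pD * _).
  rewrite [in RHS](bigD1 i) //= addrC addrK; apply: eq_bigl => j; by rewrite andbC.
transitivity (\sum_(j in ~: D) pD * (pj * PS true q + (1 - pj) * PS false q)).
  rewrite [RHS]big_mkcond [LHS]big_mkcond; apply: eq_bigr => j _.
  rewrite in_setC; case jD: (j \in D); rewrite ?andbF //=.
  have -> : j != i by apply: contraFN jD => /eqP ->.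
  rewrite /=.
  under eq_bigr => psi _ do rewrite /mk ffunE jD.
  have Hj := Hp j (negbT jD).
  have Hsplit : pD = \sum_(psi | agree D s psi && psi j) Q psi
                   + \sum_(psi | agree D s psi && ~~ psi j) Q psi.
    by rewrite /pD /pr (bigID (fun psi : prof n => psi j)).
  have H1 : \sum_(psi | agree D s psi && psi j) Q psi = pj * pD.
    by rewrite -Hj; apply: eq_bigl => psi; rewrite andbC.
  transitivity (\sum_(psi | agree D s psi && psi j) Q psi * PS true q
     + \sum_(psi | agree D s psi && ~~ psi j) Q psi * PS false q).
    rewrite (bigID (fun psi : prof n => psi j)) /=.
    congr (_ + _); apply: eq_bigr => psi /andP [_].
      by move=> ->.
    by move=> /negbTE ->.
  have H2 : \sum_(psi | agree D s psi && ~~ psi j) Q psi =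
     pD - \sum_(psi | agree D s psi && psi j) Q psi.
    by rewrite [in RHS]Hsplit addrC addKr.
  rewrite -!mulr_suml H2 H1.
  ring.
by rewrite sumr_const mulr_natl mulrnAr.
Qed.

Lemma sum_lt (R : realFieldType) n (D : {set 'I_n}) (f g : 'I_n -> R) (j0 : 'I_n) :
  j0 \in D -> (forall j, j \in D -> f j <= g j) -> f j0 < g j0 ->
  \sum_(j in D) f j < \sum_(j in D) g j.
Proof.
move=> j0D Hle Hlt.
rewrite (bigD1 j0) //= [X in _ < X](bigD1 j0) //=.
apply: ltr_leD => //; apply: ler_sum => j /andP [jD _]; exact: Hle.
Qed.

Lemma pos_ex (R : realFieldType) n (Q : prof n -> R) (P : pred (prof n)) :
  (forall psi, 0 <= Q psi) -> 0 < \sum_(psi | P psi) Q psi ->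
  exists psi0, P psi0 /\ 0 < Q psi0.
Proof.
move=> Qge Hs; case: (pickP (fun psi => P psi && (0 < Q psi))) => [psi0 /andP [H1 H2]|none].
  by exists psi0.
move: Hs; rewrite big1 ?ltxx // => psi Hpsi.
have := none psi; rewrite Hpsi /= => /negbT.
by rewrite lt_def (Qge psi) andbT negbK => /eqP.
Qed.

End Helpers.
Import Helpers.

Theorem mainTheorem10 (R : realFieldType) (PS : bool -> R -> R) (d : nat)
  (ph phh phl : R) (p : {ffun 'I_d -> bool} -> R)
  (Q : forall n, prof n -> R) (Dfam : forall n, {set {set 'I_n}}) (N0 : nat) :
  strictly_proper PS ->
  PS false phh < PS true phh ->
  PS true phl < PS false phl ->
  (2 <= d)%N ->
  0 < ph -> 0 < 1 - ph -> phl < phh -> 0 < phl -> 0 < 1 - phh ->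
  (forall n, (N0 <= n)%N -> is_sym_prior (Q n)) ->
  (forall n, (N0 <= n)%N -> forall i j : 'I_n, i != j ->
     [/\ pr (Q n) (fun psi => psi i) = ph,
         cprob (Q n) (fun psi => psi j) (fun psi => psi i) = phh &
         cprob (Q n) (fun psi => psi j) (fun psi => ~~ psi i) = phl]) ->
  (forall n, (N0 <= n)%N -> exists e : 'I_d -> 'I_n,
     [/\ injective e,
         [set e k | k : 'I_d] \in Dfam n &
         forall s : {ffun 'I_d -> bool}, (exists k, s k) -> (exists k, ~~ s k) ->
           forall j : 'I_n, j \notin [set e k | k : 'I_d] ->
             cprob (Q n) (fun psi => psi j) (fun psi => [forall k, psi (e k) == s k])
               = p s]) ->
  exists N, forall n, (N <= n)%N -> ~ interim_eq (Q n) PS phh phl (Dfam n) (@truthful R n).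
Proof.
move=> _ HA HE Hd Hph Hph1 _ _ Hphh HQ Hc He.
exists (maxn N0 d) => n; rewrite geq_max => /andP [HN0 Hdn].
case: (He n HN0) => e [einj eD Hp].
set D := [set e k | k : 'I_d].
have d0 : (0 < d)%N by apply: leq_trans Hd.
have d1 : (1 < d)%N by [].
pose i0 : 'I_d := Ordinal d0.
pose i1 : 'I_d := Ordinal d1.
have Hne : e i0 != e i1 by rewrite (inj_eq einj).
case: (HQ n HN0) => Qge _ _.
case: (Hc n HN0 (e i0) (e i1) Hne) => Hpi Hcp _.
have Hmix : 0 < \sum_(psi : prof n | psi (e i0) && ~~ psi (e i1)) Q n psi.
  move: Hcp; rewrite /cprob Hpi => Hcp.
  have E1 : pr (Q n) (predI (fun psi : prof n => psi (e i1)) (fun psi : prof n => psi (e i0)))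
      = phh * ph.
    by rewrite -Hcp mulfVK // gt_eqF.
  have E2 : ph = pr (Q n) (predI (fun psi : prof n => psi (e i1)) (fun psi : prof n => psi (e i0)))
     + \sum_(psi : prof n | psi (e i0) && ~~ psi (e i1)) Q n psi.
    rewrite -Hpi /pr (bigID (fun psi : prof n => psi (e i1))) /=; congr (_ + _).
    by apply: eq_bigl => psi; rewrite andbC.
  have : 0 < ph * (1 - phh) by rewrite mulr_gt0.
  move: E2; rewrite E1 => E2; lra.
have [psi0 [/andP [s0 s1] Qpos]] := pos_ex Qge Hmix.
have agr0 : agree D psi0 psi0 by apply/forall_inP.
set pD := pr (Q n) (agree D psi0).
have pDpos : 0 < pD.
  rewrite /pD /pr (bigD1 psi0) //=.
  have : 0 <= \sum_(i | agree D psi0 i && (i != psi0)) Q n i by apply: sumr_ge0.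
  lra.
pose sd : {ffun 'I_d -> bool} := [ffun k => psi0 (e k)].
have Hag : forall psi : prof n, [forall k, psi (e k) == sd k] = agree D psi0 psi.
  move=> psi; apply/forallP/forall_inP => H.
    move=> x /imsetP [k _ ->]; have := H k; by rewrite ffunE.
  move=> k; rewrite ffunE; apply: H; exact: imset_f.
have Hpj : forall j, j \notin D ->
    \sum_(psi : prof n | psi j && agree D psi0 psi) Q n psi = p sd * pD.
  move=> j jD.
  have sd0 : exists k, sd k by exists i0; rewrite ffunE.
  have sd1 : exists k, ~~ sd k by exists i1; rewrite ffunE.
  have H := Hp sd sd0 sd1 j jD; move: H; rewrite /cprob /pr.
  set Nm := \sum_(psi : prof n | predI _ _ psi) Q n psi.
  set Dn := \sum_(psi : prof n | [forall k, psi (e k) == sd k]) Q n psi.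
  have Hnum : Nm = \sum_(psi : prof n | psi j && agree D psi0 psi) Q n psi.
    by apply: eq_bigl => psi; rewrite /= Hag.
  have Hden : Dn = pD by apply: eq_bigl => psi; rewrite Hag.
  move=> H; rewrite -Hnum -H -Hden divfK // Hden gt_eqF //.
pose m : R := #|~: D|%:R.
pose Gq (q : R) := p sd * PS true q + (1 - p sd) * PS false q.
pose Sl := \sum_(j in D) PS (psi0 j) phl.
pose Sh := \sum_(j in D) PS (psi0 j) phh.
pose SA := \sum_(j in D) PS true phh.
pose SE := \sum_(j in D) PS false phl.
pose X := m * Gq phh - m * Gq phl + (SA - PS true phh + PS false phl - Sl).
have XY : 0 < SA + SE - Sl - Sh.
  have -> : SA + SE - Sl - Sh =
     \sum_(j in D) (PS true phh + PS false phl - PS (psi0 j) phl - PS (psi0 j) phh).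
    by rewrite !sumrB big_split.
  have e0D : e i0 \in D by apply: imset_f.
  rewrite (bigD1 (e i0)) //= s0.
  have : 0 <= \sum_(j in D | j != e i0)
      (PS true phh + PS false phl - PS (psi0 j) phl - PS (psi0 j) phh).
    apply: sumr_ge0 => j _; case: (psi0 j); lra.
  lra.
have e0D : e i0 \in D by apply: imset_f.
have e1D : e i1 \in D by apply: imset_f.
have kpos : 0 < (n.-1)%:R^-1 :> R.
  rewrite invr_gt0 ltr0n -subn1 subn_gt0; exact: leq_trans Hd Hdn.
have canc : forall x, pr (Q n) (agree D psi0) * x / pr (Q n) (agree D psi0) = x.
  by move=> x; rewrite mulrC mulrA mulVf ?mul1r // gt_eqF.
have detT : forall k b, @truthful R n k b = 0 \/ @truthful R n k b = 1.
  by move=> k [|]; [right|left].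
have repT : forall psi, agree D psi0 psi ->
    [ffun k => @truthful R n k (psi k) == 1] = mk D psi0 psi.
  move=> psi /forall_inP Hpsi; apply/ffunP => k; rewrite !ffunE.
  case kD: (k \in D).
    by rewrite -(eqP (Hpsi k kD)) /truthful; case: (psi k); rewrite ?eqxx // eq_sym oner_eq0.
  by rewrite /truthful; case: (psi k); rewrite ?eqxx // eq_sym oner_eq0.
suff main : forall c : bool, (c -> 0 < X) -> (~~ c -> X <= 0) ->
    ~ interim_eq (Q n) PS phh phl (Dfam n) (@truthful R n).
  case: (boolP (0 < X)) => HX; first exact: (main true).
  by apply: (main false) => //; rewrite leNgt.
move=> c Hc1 Hc2.
pose S' : strat R n := fun i b => if i \in D then (if c then 1 else 0) else @truthful R n i b.
have detS : forall k b, S' k b = 0 \/ S' k b = 1.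
  move=> k b; rewrite /S'; case: (k \in D); last exact: detT.
  by case: (c); [right|left].
have repS : forall psi : prof n, [ffun k => S' k (psi k) == 1] = mk D (fun _ => c) psi.
  move=> psi; apply/ffunP => k; rewrite !ffunE /S'.
  case kD: (k \in D).
    by case: (c); rewrite ?eqxx // eq_sym oner_eq0.
  by rewrite /truthful; case: (psi k); rewrite ?eqxx // eq_sym oner_eq0.
move=> H; apply: H; exists D, psi0, S'; split => //.
- by move=> i b; rewrite /S' /truthful; case: (i \in D); [case: (c)|]; try case: b;
    rewrite ?lexx ?ler01.
- by move=> i /negbTE iD b; rewrite /S' iD.
move=> i iD.
rewrite /util.
under eq_bigr => psi Hpsi do rewrite sum_det // repT //.
under [X in _ < X / _]eq_bigr => psi Hpsi do rewrite sum_det // repS.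
rewrite !(@key _ _ _ _ _ _ _ _ _ _ _ iD Hpj) !canc ltr_pM2l //.
have Hh : Sh < SA.
  apply: (sum_lt e1D) => [j _|]; last by rewrite (negbTE s1).
  case: (psi0 j); lra.
have Hl : Sl < SE.
  apply: (sum_lt e0D) => [j _|]; last by rewrite s0.
  case: (psi0 j); lra.
move: Hc1 Hc2 XY Hh Hl; rewrite /X /Gq /m /Sl /Sh /SA /SE.
case: (psi0 i); case: (c) => /= Hc1 Hc2 XY Hh Hl.
- lra.
- have := Hc2 isT. lra.
- have := Hc1 isT. lra.
- lra.
Qed.
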